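(* Fix a finite alphabet $\Sigma$ containing the space character and the dash character. Let $\Gamma_1,\ldots,\Gamma_m$ be finite sets of attribute constraints over a fixed namespace $s$ and attribute name $a$. Then there is a bound $N$, polynomial in the total size of $\Gamma_1,\ldots,\Gamma_m$, such that for every subsequence $\Gamma_{i_1},\ldots,\Gamma_{i_k}$ ($i_1<\cdots<i_k$): if there are pairwise distinct words $w_1,\ldots,w_k\in\Sigma^*$ such that each $w_j$ satisfies all constraints in $\Gamma_{i_j}$, then there are pairwise distinct words $w_1,\ldots,w_k\in\Sigma^*$ such that each $w_j$ satisfies all constraints in $\Gamma_{i_j}$ and $|w_j|\le N$ for all $j$.
   Context: An attribute constraint over $s$ and $a$ is either $[s|a\ op\ w]$ or its negation $:\!not([s|a\ op\ w])$, where $w\in\Sigma^*$ and $op\in\{=,\ \tilde{}=,\ |=,\ \hat{}=,\ \$=,\ *=\}$. A word $x\in\Sigma^*$ (the attribute value) satisfies $[s|a=w]$ iff $x=w$; $[s|a\ \tilde{}=w]$ iff $x$ is one of $w$, $w\,\text{␣}\,w'$, $w'\,\text{␣}\,w$, $w_1\,\text{␣}\,w\,\text{␣}\,w_2$ for some words $w',w_1,w_2$ (␣ the space character); $[s|a\ |=w]$ iff $x=w$ or $x=w-w'$ for some $w'$ ($-$ the dash character); $[s|a\ \hat{}=w]$ iff $w$ is a prefix of $x$; $[s|a\ \$=w]$ iff $w$ is a suffix of $x$; $[s|a\ *=w]$ iff $w$ is a factor of $x$. It satisfies $:\!not(c)$ iff it does not satisfy $c$. *)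

(* Defs.v *)
From HB Require Import structures.
From mathcomp Require Import all_boot.
Set Implicit Arguments. Unset Strict Implicit. Unset Printing Implicit Defensive.

(* Operators of attribute constraints [s|a op w]:
   =, ~=, |=, ^=, $=, *=  *)
Inductive attr_op := OpEq | OpTilde | OpDash | OpPrefix | OpSuffix | OpFactor.

Definition attr_op_eqb (o1 o2 : attr_op) : bool :=
  match o1, o2 with
  | OpEq, OpEq | OpTilde, OpTilde | OpDash, OpDash
  | OpPrefix, OpPrefix | OpSuffix, OpSuffix | OpFactor, OpFactor => true
  | _, _ => false
  end.
Lemma attr_op_eqP : Equality.axiom attr_op_eqb.
Proof. by case; case; constructor. Qed.
HB.instance Definition _ := hasDecEq.Build attr_op attr_op_eqP.

Section Constraints.
Variable T : eqType.
Variables (sp dash : T).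

(* An attribute constraint over the fixed namespace s and attribute name a:
   (pos, op, w) stands for [s|a op w] if pos = true, and for
   :not([s|a op w]) if pos = false.  Since s and a are fixed they are
   left implicit. *)
Definition attr_constraint := (bool * attr_op * seq T)%type.

Definition sat_atom (op : attr_op) (w x : seq T) : Prop :=
  match op with
  | OpEq => x = w
  | OpTilde => x = w \/ (exists w', x = w ++ sp :: w') \/
               (exists w', x = w' ++ sp :: w) \/
               (exists w1 w2, x = w1 ++ sp :: w ++ sp :: w2)
  | OpDash => x = w \/ exists w', x = w ++ dash :: w'
  | OpPrefix => exists y, x = w ++ y
  | OpSuffix => exists y, x = y ++ w
  | OpFactor => exists y z, x = y ++ w ++ z
  end.

Definition sat (x : seq T) (c : attr_constraint) : Prop :=
  let: (pos, op, w) := c in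
  if pos then sat_atom op w x else ~ sat_atom op w x.

Definition sat_all (x : seq T) (G : seq attr_constraint) : Prop :=
  forall c, c \in G -> sat x c.

(* Size of a constraint: length of its word plus one (for the operator). *)
Definition constraint_size (c : attr_constraint) : nat := (size c.2).+1.

Definition set_size (G : seq attr_constraint) : nat :=
  \sum_(c <- G) constraint_size c.

Definition total_size (Gs : seq (seq attr_constraint)) : nat :=
  \sum_(G <- Gs) (set_size G).+1.

Definition distinct_solution (S : seq (seq attr_constraint)) (ws : seq (seq T))
  : Prop :=
  size ws = size S /\ uniq ws /\
  (forall j, j < size S -> sat_all (nth [::] ws j) (nth [::] S j)).

End Constraints.

(* Main.v *)
Require Import Defs.
From mathcomp Require Import all_boot.
From mathcomp Require Import zify.
From Stdlib Require Import Classical.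

Set Implicit Arguments. Unset Strict Implicit. Unset Printing Implicit Defensive.

Section Proof.
Variable T : eqType.

Definition inf (u x : seq T) := exists y z, x = y ++ u ++ z.

Lemma cat_eq_cat (s1 s2 t1 t2 : seq T) : s1 ++ s2 = t1 ++ t2 ->
  exists m, (s1 = t1 ++ m /\ t2 = m ++ s2) \/ (t1 = s1 ++ m /\ s2 = m ++ t2).
Proof.
elim: s1 t1 => [|x s1 IH] [|y t1] /=.
- move=> ->; exists [::]; by left.
- move=> ->; exists (y :: t1); by right.
- move=> <-; exists (x :: s1); by left.
- case=> -> /IH [m [[-> ->]|[-> ->]]]; exists m; [left|right]; by [].
Qed.

Lemma pre_of (a r u y : seq T) : a ++ r = u ++ y -> size u <= size a ->
  exists y', a = u ++ y'.
Proof.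
move=> E Hs; exists (take (size a - size u) y).
have := congr1 (take (size a)) E; rewrite take_size_cat // take_cat.
by rewrite ltnNge Hs /=.
Qed.

Lemma suf_of (l c u y : seq T) : l ++ c = y ++ u -> size u <= size c ->
  exists y', c = y' ++ u.
Proof.
move=> /cat_eq_cat [m [[Hl Hu]|[Hy Hc]]] Hs; last by exists m.
have: size m = 0 by move: Hs; rewrite Hu size_cat; lia.
move/eqP; rewrite size_eq0 => /eqP Em; exists [::]; by rewrite Hu Em.
Qed.

Lemma inf_left (x y u z a r : seq T) : x = y ++ u ++ z -> x = a ++ r ->
  size y + size u <= size a -> inf u a.
Proof.
move=> E1 E2 Hs; exists y, (take (size a - size (y ++ u)) z).
have := congr1 (take (size a)) E2; rewrite take_size_cat // => Ha.
rewrite -{1}Ha E1 catA take_cat.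
have -> : (size a < size (y ++ u)) = false by rewrite size_cat; lia.
by rewrite -catA.
Qed.

Lemma inf_right (x y u z l c : seq T) : x = y ++ u ++ z -> x = l ++ c ->
  size l <= size y -> inf u c.
Proof.
move=> E1 E2 Hs; exists (drop (size l) y), z.
have := congr1 (drop (size l)) E2; rewrite drop_size_cat // => Hc.
rewrite -Hc E1 drop_cat; case: ltnP => H //.
have -> : size l = size y by lia.
by rewrite subnn drop0 drop_size.
Qed.

Definition sufs (y : seq T) := [seq drop i y | i <- iota 0 (size y).+1].
Definition okp (F : seq (seq T)) (s : seq T) := has (prefix s) F.
Definition st F y := nth [::] (sufs y) (find (okp F) (sufs y)).
Definition cands (F : seq (seq T)) : seq (seq T) :=
  [::] :: flatten [seq [seq take k u | k <- iota 0 (size u).+1] | u <- F].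

Lemma size_sufs y : size (sufs y) = (size y).+1.
Proof. by rewrite /sufs size_map size_iota. Qed.

Lemma nth_sufs y i : i <= size y -> nth [::] (sufs y) i = drop i y.
Proof.
move=> H; rewrite /sufs (nth_map 0) ?size_iota ?nth_iota //.
Qed.

Lemma st_suffix F y : exists z, y = z ++ st F y.
Proof.
rewrite /st; case: (ltnP (find (okp F) (sufs y)) (size (sufs y))) => H.
- rewrite nth_sufs; last by move: H; rewrite size_sufs.
  by exists (take (find (okp F) (sufs y)) y); rewrite cat_take_drop.
- by rewrite nth_default //; exists y; rewrite cats0.
Qed.

Lemma st_max F y i : okp F (drop i y) -> exists z, st F y = z ++ drop i y.
Proof.
move=> Hok; case: (leqP i (size y)) => Hi; last first.
  by rewrite drop_oversize ?(ltnW Hi) //; exists (st F y); rewrite cats0.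
have Hf : find (okp F) (sufs y) <= i.
  rewrite leqNgt; apply/negP => Hlt.
  have := before_find [::] Hlt; rewrite nth_sufs // Hok //.
rewrite /st nth_sufs; last by lia.
set f := find _ _.
exists (take (i - f) (drop f y)).
rewrite -{1}(cat_take_drop (i - f) (drop f y)) drop_drop subnK //.
Qed.

Lemma st_cands F y : st F y \in cands F.
Proof.
rewrite /st; case: (boolP (has (okp F) (sufs y))) => H; last first.
  by rewrite nth_default ?mem_head // leqNgt -has_find.
move: (nth_find [::] H); set s := nth _ _ _ => /hasP [u Hu Hp].
rewrite /cands in_cons; apply/orP; right.
apply/flatten_mapP; exists u => //.
move: Hp; rewrite prefixE => /eqP Ht.
have Hs : size s <= size u.
  have := congr1 size Ht; rewrite size_take; case: ltnP => H1 E; lia.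
apply/mapP; exists (size s); first by rewrite mem_iota.
by rewrite Ht.
Qed.

Lemma repeat_state F (x : seq T) p W : size (cands F) <= W ->
  exists i j, [/\ p <= i, i < j, j <= p + W & st F (take i x) = st F (take j x)].
Proof.
move=> HW.
set s := [seq st F (take k x) | k <- iota p W.+1].
have : ~~ uniq s.
  apply/negP => U.
  have := uniq_leq_size U (s2 := cands F).
  have Hs : size s = W.+1 by rewrite /s size_map size_iota.
  have Hsub : {subset s <= cands F}.
    by move=> z /mapP [k _ ->]; apply: st_cands.
  move=> /(_ Hsub) H2; rewrite Hs in H2; have := leq_trans H2 HW; by rewrite ltnn.
move/(uniqPn [::]) => [i [j [Hij Hj]]].
move: Hj; rewrite /s size_map size_iota => Hj.
rewrite /s.
clear s.
rewrite !(nth_map 0) ?size_iota ?nth_iota //; try lia.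
move=> E; exists (p + i), (p + j); split => //; lia.
Qed.

Lemma cut_noforb F a b c u : u \in F -> st F a = st F (a ++ b) ->
  inf u (a ++ c) -> inf u (a ++ b ++ c).
Proof.
move=> HuF Hst [y [z /cat_eq_cat [mm [[Ha Hu]|[Hy Hc]]]]].
- move: Hu => /cat_eq_cat [m' [[Hu' Hcc]|[Hm Hz]]].
  + have Hok : okp F (drop (size y) a).
      rewrite Ha drop_size_cat //; apply/hasP; exists u => //.
      by apply/prefixP; exists m'.
    have [z0 Hz0] := st_max Hok.
    have [z1 Hz1] := st_suffix F (a ++ b).
    exists (z1 ++ z0), z.
    rewrite catA Hz1 -Hst Hz0 Ha drop_size_cat // Hcc Hu' -!catA //.
  + exists y, (m' ++ b ++ c); by rewrite Ha Hm -!catA.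
- exists (a ++ b ++ mm), z; by rewrite Hc -!catA.
Qed.



Variables sp dash : T.

Definition patw (op : attr_op) (w : seq T) : seq T :=
  if op is OpTilde then sp :: w ++ [:: sp] else w.
Definition pat (c : attr_constraint T) : seq T := patw c.1.2 c.2.

Lemma atom_imp op w m a r1 r2 l1 l2 c x1 x2 :
  size w + 2 <= m -> m <= size a -> m <= size c ->
  x1 = a ++ r1 -> x1 = l1 ++ c -> x2 = a ++ r2 -> x2 = l2 ++ c ->
  (inf (patw op w) x1 -> inf (patw op w) x2) ->
  sat_atom sp dash op w x1 -> sat_atom sp dash op w x2.
Proof.
move=> Hw Ha Hc Ea1 Ec1 Ea2 Ec2 Hinf.
have Hx1 : size w < size x1 by rewrite Ea1 size_cat; lia.
have Hpre : forall u y, x1 = u ++ y -> size u <= m -> exists y', x2 = u ++ y'.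
  move=> u y E Hu; rewrite Ea1 in E; have [y' Hy'] := pre_of E (leq_trans Hu Ha).
  by exists (y' ++ r2); rewrite Ea2 Hy' catA.
have Hsuf : forall u y, x1 = y ++ u -> size u <= m -> exists y', x2 = y' ++ u.
  move=> u y E Hu; rewrite Ec1 in E; have [y' Hy'] := suf_of E (leq_trans Hu Hc).
  by exists (l2 ++ y'); rewrite Ec2 Hy' catA.
case: op Hinf => /= Hinf.
- by move=> E; move: Hx1; rewrite E ltnn.
- move=> [E|[[w' E]|[[w' E]|[w1 [w2 E]]]]].
  + by move: Hx1; rewrite E ltnn.
  + have E' : x1 = (w ++ [:: sp]) ++ w' by rewrite E -catA.
    have [y' ->] := Hpre _ _ E' ltac:(rewrite size_cat /=; lia).
    by right; left; exists y'; rewrite -catA.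
  + have [y' ->] := Hsuf (sp :: w) _ E ltac:(rewrite /=; lia).
    by right; right; left; exists y'.
  + have [y [z ->]] : inf (sp :: w ++ [:: sp]) x2.
      by apply: Hinf; exists w1, w2; rewrite E /= -catA.
    by right; right; right; exists y, z; rewrite /= -catA.
- move=> [E|[w' E]].
  + by move: Hx1; rewrite E ltnn.
  + have E' : x1 = (w ++ [:: dash]) ++ w' by rewrite E -catA.
    have [y' ->] := Hpre _ _ E' ltac:(rewrite size_cat /=; lia).
    by right; exists y'; rewrite -catA.
- move=> [y E]; apply: Hpre E _; lia.
- move=> [y E]; apply: Hsuf E _; lia.
- move=> H; exact: Hinf H.
Qed.

Lemma sat_cut (G : seq (attr_constraint T)) m a b c :
  (forall k, k \in G -> size k.2 + 2 <= m) -> m <= size a -> m <= size c ->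
  (forall k, k \in G -> inf (pat k) (a ++ b ++ c) <-> inf (pat k) (a ++ c)) ->
  sat_all sp dash (a ++ b ++ c) G -> sat_all sp dash (a ++ c) G.
Proof.
move=> Hsz Ha Hc Hinf Hsat [[pos op] w] Hk.
have Hw := Hsz _ Hk; have Hi := Hinf _ Hk; have := Hsat _ Hk.
rewrite /pat /= in Hw Hi; rewrite /sat.
clear Hk; case: pos.
- move=> H.
  apply: (atom_imp (m := m) (a := a) (r1 := b ++ c) (l1 := a ++ b) (r2 := c) (l2 := a) (c := c)) H => //; try by rewrite -?catA; try by case: Hi.
- move=> H1 H2; apply: H1.
  apply: (atom_imp (m := m) (a := a) (r1 := c) (l1 := a) (r2 := b ++ c) (l2 := a ++ b) (c := c)) H2 => //; try by rewrite -?catA; try by case: Hi.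
Qed.



Lemma size_pat k : size (pat k) <= size k.2 + 2.
Proof. rewrite /pat /patw; case: k.1.2 => //=; try lia. rewrite size_cat /=; lia. Qed.

Lemma occs (x : seq T) (P : seq (seq T)) : exists es : seq nat, size es = size P /\
  forall u, u \in P -> inf u x -> exists y z, x = y ++ u ++ z /\ (size y + size u).-1 \in es.
Proof.
elim: P => [|u P [es [Hs He]]]; first by exists [::]; split => // u; rewrite in_nil.
case: (classic (inf u x)) => [[y [z E]]|N].
- exists ((size y + size u).-1 :: es); split; first by rewrite /= Hs.
  move=> v; rewrite in_cons => /orP [/eqP -> _|Hv Hi].
  + by exists y, z; split => //; rewrite mem_head.
  + have [y' [z' [E' He']]] := He v Hv Hi.
    by exists y', z'; split => //; rewrite in_cons He' orbT.
- exists (0 :: es); split; first by rewrite /= Hs.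
  move=> v; rewrite in_cons => /orP [/eqP -> Hi|Hv Hi]; first by case: (N Hi).
  have [y' [z' [E' He']]] := He v Hv Hi.
  by exists y', z'; split => //; rewrite in_cons He' orbT.
Qed.

Lemma free_block (es : seq nat) (g : nat -> nat) :
  exists t, t <= size es /\ t \notin map g es.
Proof.
case: (boolP (all (fun t => t \in map g es) (iota 0 (size es).+1))) => H.
- exfalso; have Hsub : {subset iota 0 (size es).+1 <= map g es}.
    by move=> t Ht; exact: (allP H).
  by have := uniq_leq_size (iota_uniq 0 _) Hsub; rewrite size_iota size_map ltnn.
- move/allPn: H => [t Ht Hn]; exists t; split => //.
  by move: Ht; rewrite mem_iota.
Qed.

Lemma divlem e m t B : 0 < B -> m + t * B <= e -> e < m + t * B + B ->
  (e - m) %/ B = t.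
Proof.
move=> HB H1 H2.
have -> : e - m = t * B + (e - m - t * B) by lia.
rewrite divnMDl // divn_small ?addn0 //; lia.
Qed.

Lemma cut (G : seq (attr_constraint T)) m W x :
  0 < m -> (forall k, k \in G -> size k.2 + 2 <= m) -> size G < m ->
  size (cands (map pat G)) <= W ->
  2 * m + m * (W + m) <= size x -> sat_all sp dash x G ->
  exists x', [/\ sat_all sp dash x' G, size x' < size x & size x <= size x' + W].
Proof.
move=> Hm Hsz HG HW Hx Hsat.
have [es [Hes Hocc]] := occs x (map pat G).
have [B EB] : exists B, B = W + m by eexists.
have [t [Ht Hg]] := free_block es (fun e => (e - m) %/ B).
rewrite Hes size_map in Ht.
have [p Ep] : exists p, p = m + t * B by eexists.
have [i [j [Hpi Hij Hjp Hst]]] := repeat_state x p HW.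
have HtB : t.+1 * B <= m * B by apply: leq_mul; lia.
rewrite mulSn in HtB.
have HmB : m * B = m * W + m * m by rewrite EB mulnDr.
have Hjx : j + m <= size x by lia.
have [a Ea] : exists a, a = take i x by eexists.
have [b Eb] : exists b, b = drop i (take j x) by eexists.
have [c Ec] : exists c, c = drop j x by eexists.
have Eab : a ++ b = take j x.
  by rewrite Ea Eb -(take_takel x (ltnW Hij)) cat_take_drop.
have Ex : x = a ++ b ++ c by rewrite catA Eab Ec cat_take_drop.
have Sa : size a = i by rewrite Ea size_takel //; lia.
have Sab : size (a ++ b) = j by rewrite Eab size_takel //; lia.
have Sc : size c = size x - j by rewrite Ec size_drop.
have Hinf : forall k, k \in G -> inf (pat k) (a ++ b ++ c) <-> inf (pat k) (a ++ c).
  move=> k Hk; have Hu : pat k \in map pat G := map_f pat Hk.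
  have Hsk : size (pat k) <= m := leq_trans (size_pat k) (Hsz k Hk).
  split; last first.
    apply: (cut_noforb Hu); by rewrite Eab Ea.
  rewrite -Ex => Hi.
  have [y [z [Ey He]]] := Hocc _ Hu Hi.
  case: (leqP (size y + size (pat k)) p) => H1.
    have [y' [z' Ha]] : inf (pat k) a.
      apply: (inf_left Ey (r := b ++ c) Ex); lia.
    by exists y', (z' ++ c); rewrite Ha -!catA.
  case: (leqP (p + W) (size y)) => H2.
    have [y' [z' Hc]] : inf (pat k) c.
      apply: (inf_right Ey (l := a ++ b)); [by rewrite -catA | lia].
    by exists (a ++ y'), z'; rewrite Hc -!catA.
  exfalso.
  have Hd : ((size y + size (pat k)).-1 - m) %/ B = t.
    apply: divlem; lia.
  case/negP: Hg; rewrite -Hd; exact: (map_f (fun e => (e - m) %/ B) He).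
exists (a ++ c); split.
- apply: (sat_cut (m := m) (b := b)) => //; try lia.
  by rewrite -Ex.
- rewrite size_cat Sa Sc; lia.
- rewrite size_cat Sa Sc; lia.
Qed.

Lemma shrink G m W t x :
  0 < m -> (forall k, k \in G -> size k.2 + 2 <= m) -> size G < m ->
  size (cands (map pat G)) <= W ->
  2 * m + m * (W + m) <= t -> sat_all sp dash x G -> t < size x ->
  exists x', [/\ sat_all sp dash x' G, t < size x' + W & size x' <= t].
Proof.
move=> Hm Hsz HG HW Ht.
suff: forall n x, size x < n -> sat_all sp dash x G -> t < size x ->
  exists x', [/\ sat_all sp dash x' G, t < size x' + W & size x' <= t].
  by move=> H Hs Hx; apply: (H (size x).+1).
elim=> [|n IH] y Hn Hs Hy; first by lia.
have [x' [Hs' Hlt Hle]] := cut Hm Hsz HG HW (leq_trans Ht (ltnW Hy)) Hs.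
case: (leqP (size x') t) => H.
- exists x'; split => //; lia.
- apply: (IH x') => //; lia.
Qed.

Lemma many G m W K x :
  0 < m -> (forall k, k \in G -> size k.2 + 2 <= m) -> size G < m ->
  size (cands (map pat G)) <= W -> sat_all sp dash x G ->
  2 * m + m * (W + m) + K * W < size x + W ->
  exists ys, [/\ size ys = K, uniq ys &
    forall y, y \in ys -> sat_all sp dash y G /\ size y + W <= 2 * m + m * (W + m) + K * W].
Proof.
move=> Hm Hsz HG HW Hx.
elim: K => [|K IH] HK; first by exists [::].
have [ys [Hys Hu Hy]] : exists ys, [/\ size ys = K, uniq ys &
    forall y, y \in ys -> sat_all sp dash y G /\ size y + W <= 2 * m + m * (W + m) + K * W].
  apply: IH; move: HK; rewrite mulSn; lia.
have [y' [Hs' H1 H2]] := shrink (t := 2 * m + m * (W + m) + K * W) Hm Hsz HG HW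
  (leq_addr _ _) Hx ltac:(move: HK; rewrite mulSn; lia).
exists (y' :: ys); split.
- by rewrite /= Hys.
- rewrite /= Hu andbT; apply/negP => Hin.
  have [_ Hsy] := Hy _ Hin; lia.
- move=> y; rewrite in_cons => /orP [/eqP ->|Hin].
  + split => //; rewrite mulSn; lia.
  + have [Hs Hsy] := Hy _ Hin; split => //; rewrite mulSn; lia.
Qed.

Lemma uniq_ins (pre ws : seq (seq T)) y :
  uniq (pre ++ y :: ws) = (y \notin pre ++ ws) && uniq (pre ++ ws).
Proof.
rewrite !cat_uniq /= mem_cat negb_or.
by case: (y \in pre) (y \in ws) (uniq pre) (has (mem pre) ws) (uniq ws) => [] [] [] [] [].
Qed.

Lemma assemble N K (Ss : seq (seq (attr_constraint T))) :
  (forall G, G \in Ss -> forall x, sat_all sp dash x G -> N < size x ->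
     exists ys, [/\ K <= size ys, uniq ys &
        forall y, y \in ys -> sat_all sp dash y G /\ size y <= N]) ->
  forall pre ws, size pre + size Ss <= K -> (forall w, w \in pre -> size w <= N) ->
  size ws = size Ss -> uniq (pre ++ ws) ->
  (forall j, j < size Ss -> sat_all sp dash (nth [::] ws j) (nth [::] Ss j)) ->
  exists ws', [/\ size ws' = size Ss, uniq (pre ++ ws'),
     (forall j, j < size Ss -> sat_all sp dash (nth [::] ws' j) (nth [::] Ss j)) &
     forall w, w \in ws' -> size w <= N].
Proof.
elim: Ss => [|G Ss IH] Hpool pre ws HK Hpre Hsz Hu Hsat.
  by case: ws Hsz Hu Hsat => // _ Hu _; exists [::]; split.
case: ws Hsz Hu Hsat => [|w ws] //= [Hsz] Hu Hsat.
rewrite /= in HK.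
have Hw : sat_all sp dash w G := Hsat 0 erefl.
have Hrest : forall j, j < size Ss -> sat_all sp dash (nth [::] ws j) (nth [::] Ss j).
  by move=> j Hj; apply: (Hsat j.+1).
move: Hu; rewrite uniq_ins => /andP [Hwn Hu].
have [y [Hy Hyn Hyni]] : exists y, [/\ sat_all sp dash y G, size y <= N & y \notin pre ++ ws].
  case: (leqP (size w) N) => Hwl; first by exists w.
  have [ys [Hk Hys Hyy]] := Hpool G (mem_head _ _) w Hw Hwl.
  case: (boolP (all (fun y => y \in pre ++ ws) ys)) => Ha.
    exfalso; have := uniq_leq_size Hys (s2 := pre ++ ws).
    rewrite size_cat Hsz; move=> H; have := H (fun z Hz => (allP Ha) z Hz) => H2; have := leq_trans (leq_trans HK Hk) H2; by rewrite addnS ltnn.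
  move/allPn: Ha => [y Hyin Hyn]; have [H1 H2] := Hyy _ Hyin.
  by exists y.
have [ws' [Hs' Hu' Hsat' Hn']] := IH (fun G' HG' => Hpool G' ltac:(by rewrite in_cons HG' orbT))
  (rcons pre y) ws ltac:(by rewrite size_rcons addSn -addnS)
  ltac:(move=> z; rewrite mem_rcons in_cons => /orP [/eqP ->|/Hpre] //)
  Hsz ltac:(by rewrite cat_rcons uniq_ins Hyni Hu) Hrest.
exists (y :: ws'); split.
- by rewrite /= Hs'.
- by rewrite -cat_rcons.
- by case=> [|j] //= Hj; apply: Hsat'.
- by move=> z; rewrite in_cons => /orP [/eqP ->|/Hn'].
Qed.

End Proof.

Lemma set_size_cons (T : eqType) (k : attr_constraint T) G :
  set_size (k :: G) = constraint_size k + set_size G.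
Proof. by rewrite /set_size big_cons. Qed.

Lemma size_le_set (T : eqType) (G : seq (attr_constraint T)) : size G <= set_size G.
Proof. elim: G => [|k G IH]; first by rewrite /set_size big_nil. rewrite set_size_cons /constraint_size /=; lia. Qed.

Lemma elem_le (T : eqType) (G : seq (attr_constraint T)) k : k \in G -> (size k.2).+1 <= set_size G.
Proof.
elim: G => [|k' G IH] //; rewrite in_cons set_size_cons /constraint_size => /orP [/eqP ->|/IH H].
- exact: leq_addr.
- exact: leq_trans H (leq_addl _ _).
Qed.

Lemma total_cons (T : eqType) (G : seq (attr_constraint T)) Gs :
  total_size (G :: Gs) = (set_size G).+1 + total_size Gs.
Proof. by rewrite /total_size big_cons. Qed.

Lemma set_le_total (T : eqType) (Gs : seq (seq (attr_constraint T))) G :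
  G \in Gs -> set_size G <= total_size Gs.
Proof.
elim: Gs => [|G' Gs IH] //; rewrite in_cons total_cons => /orP [/eqP ->|/IH]; lia.
Qed.

Lemma size_le_total (T : eqType) (Gs : seq (seq (attr_constraint T))) : size Gs <= total_size Gs.
Proof. elim: Gs => [|G Gs IH]; first by rewrite /total_size big_nil. rewrite total_cons /=; lia. Qed.

Lemma size_cands (T : eqType) (F : seq (seq T)) :
  size (cands F) = 1 + sumn [seq (size u).+1 | u <- F].
Proof.
elim: F => [|u F IH] //=.
rewrite /cands /= size_cat size_map size_iota.
move: IH; rewrite /cands /= => [[->]]; lia.
Qed.

Lemma cands_le (T : eqType) sp (G : seq (attr_constraint T)) :
  size (cands (map (pat sp) G)) <= 1 + 3 * set_size G.
Proof.
rewrite size_cands; elim: G => [|k G IH]; first by rewrite /set_size big_nil.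
rewrite /= set_size_cons /constraint_size; have := size_pat sp k; lia.
Qed.

Unset Implicit Arguments.
Set Strict Implicit.

Theorem mainTheorem4 (Sigma : finType) (sp dash : Sigma) (Hsd : sp != dash) :
  exists c d : nat,
  forall Gs : seq (seq (attr_constraint Sigma)),
  let N := c * (total_size Gs).+1 ^ d in
  forall S : seq (seq (attr_constraint Sigma)), subseq S Gs ->
    (exists ws, distinct_solution sp dash S ws) ->
    exists ws, distinct_solution sp dash S ws /\
               (forall w, w \in ws -> size w <= N).
Proof.
exists 10, 2 => Gs N S Hsub [ws [Hsz [Hu Hsat]]].
rewrite /N; clear N.
have [m Em] : exists m, m = (total_size Gs).+1 by eexists.
rewrite -Em.
have Hm : 0 < m by rewrite Em.
have HSK : size S <= total_size Gs.
  exact: leq_trans (size_subseq Hsub) (size_le_total Gs).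
have Hpool : forall G, G \in S -> forall x, sat_all sp dash x G -> 10 * m ^ 2 < size x ->
     exists ys, [/\ total_size Gs <= size ys, uniq ys &
        forall y, y \in ys -> sat_all sp dash y G /\ size y <= 10 * m ^ 2].
  move=> G HG x Hx Hxl.
  have HGs := set_le_total (mem_subseq Hsub HG).
  have Hsz' : forall k, k \in G -> size k.2 + 2 <= m.
    by move=> k Hk; have := elem_le Hk; lia.
  have HG' : size G < m by rewrite Em ltnS; exact: leq_trans (size_le_set G) HGs.
  have HW : size (cands (map (pat sp) G)) <= 3 * m by have := cands_le sp G; lia.
  have Hbig : 2 * m + m * (3 * m + m) + total_size Gs * (3 * m) <= 10 * m ^ 2.
    have -> : total_size Gs = m - 1 by lia.
    rewrite expnS expn1; nia.
  have [ys [Hys Hu' Hy]] := many Hm Hsz' HG' HW Hx (K := total_size Gs) ltac:(lia).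
  exists ys; split => //; first by rewrite Hys.
  move=> y Hyin; have [H1 H2] := Hy _ Hyin; split => //; lia.
have [ws' [Hs' Hu' Hsat' Hn']] := assemble Hpool (pre := [::]) (ws := ws) ltac:(done)
  ltac:(done) Hsz Hu Hsat.
by exists ws'; split => //; split.
Qed.
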